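(* Let $\mathcal{C}$ be a finite set of classes and let $\ell_\star, \ell_1, \dots, \ell_K$ ($K \ge 1$) be $\mathcal{C}$-valued random variables on a common probability space, where $\ell_\star$ is the oracle label and $\ell_i$ is the label given by annotator $i$. Assume the annotators are positively correlated, namely $\mathbb{P}(\ell_i = \ell_\star \mid \ell_j = \ell_\star) \ge \mathbb{P}(\ell_i = \ell_\star)$ for all $i, j \in \{1, \dots, K\}$ with $\mathbb{P}(\ell_j = \ell_\star) > 0$. Then $$\frac{1}{K}\sum_{i=1}^K \mathbb{P}(\ell_i = \ell_\star) \;\le\; \mathcal{U} := \sqrt{\frac{1}{K^2}\sum_{i=1}^K\sum_{j=1}^K \mathbb{P}(\ell_i = \ell_j)}.$$
   Context: The quantity $\frac{1}{K}\sum_{i=1}^K \mathbb{P}(\ell_i = \ell_\star)$ is the oracle accuracy $\mathbb{P}(\ell_{\mathcal K} = \ell_\star)$ of the ''average annotator'' $\ell_{\mathcal K}$, i.e. the label obtained by choosing one of the $K$ annotators uniformly at random (independently of everything else). *)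

(* Defs.v *)
From mathcomp Require Import all_boot all_order all_algebra.
From mathcomp Require Import all_classical all_reals all_analysis.
Set Implicit Arguments. Unset Strict Implicit. Unset Printing Implicit Defensive.
Import Order.TTheory GRing.Theory Num.Theory.
Local Open Scope classical_set_scope.
Local Open Scope ring_scope.

Definition pr d (T : measurableType d) (R : realType) (P : probability T R)
  (A : set T) : R := fine (P A).

Definition cond_pr d (T : measurableType d) (R : realType) (P : probability T R)
  (A B : set T) : R := pr P (A `&` B) / pr P B.

Definition eq_event (T C : Type) (f g : T -> C) : set T := [set x | f x = g x].

(** A random variable with values in a finite set C (discrete σ-algebra on C). *)
Definition finite_rv d (T : measurableType d) (C : finType) (f : T -> C) : Prop :=
  forall c : C, measurable (f @^-1` [set c]).

(* Main.v *)
From mathcomp Require Import all_boot all_order all_algebra.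
From mathcomp Require Import all_classical all_reals all_analysis.
Require Import Defs.
Import Order.TTheory GRing.Theory Num.Theory.
Local Open Scope classical_set_scope.
Local Open Scope ring_scope.

Lemma meas_eq d (T : measurableType d) (C : finType) (f g : T -> C) :
  finite_rv f -> finite_rv g -> measurable (eq_event f g).
Proof.
move=> hf hg.
have -> : eq_event f g = \bigcup_(c in [set: C]) (f @^-1` [set c] `&` g @^-1` [set c]).
  apply/seteqP; split => x /=.
    by rewrite /eq_event /= => e; exists (f x) => //; split.
  by case=> c _ [/= e1 e2]; rewrite /eq_event /= e1 e2.
apply: fin_bigcup_measurable; first exact: finite_finset.
by move=> c _; apply: measurableI.
Qed.

Lemma pr_ge0 d (T : measurableType d) (R : realType) (P : probability T R) A :
  0 <= pr P A.
Proof. exact/fine_ge0/measure_ge0. Qed.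

Lemma pr_le d (T : measurableType d) (R : realType) (P : probability T R) A B :
  measurable A -> measurable B -> A `<=` B -> pr P A <= pr P B.
Proof.
move=> mA mB AB; rewrite /pr; apply: fine_le.
- by rewrite ge0_fin_numE ?measure_ge0 // (le_lt_trans (probability_le1 P mA)) ?ltry.
- by rewrite ge0_fin_numE ?measure_ge0 // (le_lt_trans (probability_le1 P mB)) ?ltry.
by apply: le_measure => //; rewrite inE.
Qed.

Theorem theorem1 (d : measure_display) (T : measurableType d) (R : realType)
  (P : probability T R) (C : finType) (K : nat) (hK : (1 <= K)%N)
  (lstar : T -> C) (l : 'I_K -> T -> C)
  (hstar : finite_rv lstar) (hl : forall i, finite_rv (l i))
  (hcorr : forall i j : 'I_K, 0 < pr P (eq_event (l j) lstar) ->
     cond_pr P (eq_event (l i) lstar) (eq_event (l j) lstar)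
       >= pr P (eq_event (l i) lstar)) :
  K%:R^-1 * (\sum_(i < K) pr P (eq_event (l i) lstar))
    <= Num.sqrt ((K%:R ^+ 2)^-1 *
                 (\sum_(i < K) \sum_(j < K) pr P (eq_event (l i) (l j)))).
Proof.
set p := fun i => pr P (eq_event (l i) lstar).
have key : forall i j, p i * p j <= pr P (eq_event (l i) (l j)).
  move=> i j.
  have hI : pr P (eq_event (l i) lstar `&` eq_event (l j) lstar)
            <= pr P (eq_event (l i) (l j)).
    apply: pr_le; [apply: measurableI; exact: meas_eq | exact: meas_eq |].
    by move=> x [/= e1 e2]; rewrite /eq_event /= e1 e2.
  have [pj0|] := ltP 0 (p j).
    apply: le_trans hI.
    have := hcorr i j pj0; rewrite /cond_pr ler_pdivlMr //.
  rewrite le_eqVlt ltNge pr_ge0 orbF => /eqP ->.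
  by rewrite mulr0 pr_ge0.
set S := \sum_(i < K) p i.
have hS : S ^+ 2 <= \sum_(i < K) \sum_(j < K) pr P (eq_event (l i) (l j)).
  rewrite expr2 big_distrl /=; apply: ler_sum => i _.
  rewrite big_distrr /=; apply: ler_sum => j _; exact: key.
have S0 : 0 <= S by apply: sumr_ge0 => i _; exact: pr_ge0.
have K0 : 0 < K%:R :> R by rewrite ltr0n.
rewrite -[X in X <= _]ger0_norm ?mulr_ge0 ?invr_ge0 ?ler0n //.
rewrite -sqrtr_sqr ler_sqrt; last first.
  by rewrite mulr_ge0 ?invr_ge0 ?exprn_ge0 ?ler0n // (le_trans _ hS) ?exprn_ge0.
rewrite exprMn exprVn; apply: ler_wpM2l => //; by rewrite invr_ge0 exprn_ge0 ?ler0n.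

Qed.
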